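(* Let $V$ be a finite ground set, let $(V,\mathcal{F})$ be a matroid whose largest independent set has cardinality $K$, and let $f:2^V\to\mathbb{R}$ be nondecreasing with submodularity ratio $\gamma$. Let $S^*\in\arg\max_{S\in\mathcal{F}} f(S)$ and let $S^{\mathrm{G}}$ be the output of the greedy algorithm described below. Then $$\frac{f(S^{\mathrm{G}})-f(\emptyset)}{f(S^* )-f(\emptyset)}\ \ge\ \frac{\gamma^3}{\gamma^3+1}.$$
   Context: $f$ is nondecreasing if $f(S_1)\le f(S_2)$ for all $S_1\subsetneqq S_2\subset V$. For $S,U\subset V$ let $\rho_U(S)=f(S\cup U)-f(S)$, and write $\rho_\omega(S)=\rho_{\{\omega\}}(S)$. The submodularity ratio of a nondecreasing $f$ is the largest $\gamma\in\mathbb{R}_+$ such that $\gamma\,\rho_\omega(S\cup U)\le\rho_\omega(S)$ for all $S,U\subset V$ and all $\omega\in V$. A matroid $(V,\mathcal{F})$: $\emptyset\in\mathcal{F}$; $\mathcal{F}$ is closed under taking subsets; and if $S_1,S_2\in\mathcal{F}$ with $|S_1|<|S_2|$ there is $\omega\in S_2\setminus S_1$ with $S_1\cup\{\omega\}\in\mathcal{F}$. Greedy algorithm: set $S=\emptyset$, $U=\emptyset$. While $U\neq V$: choose $i\in\arg\max_{i\in V\setminus U}\rho_i(S)$; if $S\cup\{i\}\notin\mathcal{F}$, set $U\leftarrow U\cup\{i\}$; otherwise set $S\leftarrow S\cup\{i\}$ and $U\leftarrow U\cup\{i\}$. When $U=V$, output $S^{\mathrm{G}}=S$. The ratio in the claim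 is considered when $f(S^* )\neq f(\emptyset)$. *)

(* Defs.v *)
From HB Require Import structures.
From mathcomp Require Import all_boot all_order all_algebra.
Set Implicit Arguments. Unset Strict Implicit. Unset Printing Implicit Defensive.
Import Order.TTheory GRing.Theory Num.Theory.
Local Open Scope ring_scope.

Section Defs.
Variables (R : realFieldType) (T : finType).

Definition nondecreasing_setfun (f : {set T} -> R) : Prop :=
  forall S1 S2 : {set T}, S1 \proper S2 -> f S1 <= f S2.

Definition rho (f : {set T} -> R) (U S : {set T}) : R := f (S :|: U) - f S.

Definition rho1 (f : {set T} -> R) (w : T) (S : {set T}) : R := rho f [set w] S.

Definition subm_ratio_ok (f : {set T} -> R) (g : R) : Prop :=
  forall (S U : {set T}) (w : T), g * rho1 f w (S :|: U) <= rho1 f w S.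

Definition is_submodularity_ratio (f : {set T} -> R) (g : R) : Prop :=
  [/\ 0 <= g, subm_ratio_ok f g &
      forall g' : R, 0 <= g' -> subm_ratio_ok f g' -> g' <= g].

Definition is_matroid (F : {set {set T}}) : Prop :=
  [/\ set0 \in F,
      (forall S1 S2 : {set T}, S1 \subset S2 -> S2 \in F -> S1 \in F) &
      (forall S1 S2 : {set T}, S1 \in F -> S2 \in F -> #|S1| < #|S2| ->
         exists2 w, w \in S2 :\: S1 & w |: S1 \in F)]%N.

Definition max_indep_card (F : {set {set T}}) (K : nat) : Prop :=
  (exists2 S, S \in F & #|S| = K) /\ (forall S, S \in F -> #|S| <= K)%N.

(* Reachable states (S, U) of the greedy algorithm, for any tie-breaking
   in the argmax.  One step: pick i in V \ U maximizing rho_i(S); add i to U,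
   and add i to S iff S ∪ {i} is independent. *)
Inductive greedy_reach (F : {set {set T}}) (f : {set T} -> R)
  : {set T} -> {set T} -> Prop :=
| greedy_init : greedy_reach F f set0 set0
| greedy_step (S U : {set T}) (i : T) :
    greedy_reach F f S U ->
    i \notin U ->
    (forall j, j \notin U -> rho1 f j S <= rho1 f i S) ->
    greedy_reach F f (if i |: S \in F then i |: S else S) (i |: U).

Definition greedy_output (F : {set {set T}}) (f : {set T} -> R) (SG : {set T}) : Prop :=
  greedy_reach F f SG [set: T].

End Defs.

(* Main.v *)
Require Import Defs.
From HB Require Import structures.
From mathcomp Require Import all_boot all_order all_algebra.
From mathcomp Require Import ring lra.
Import Order.TTheory GRing.Theory Num.Theory.
Local Open Scope ring_scope.

Section Proofs.
Variables (R : realFieldType) (T : finType).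
Implicit Types (f : {set T} -> R) (F : {set {set T}}).

Lemma monoS f (A B : {set T}) : nondecreasing_setfun f -> A \subset B -> f A <= f B.
Proof.
move=> Hf AB; case: (eqVneq A B) => [->//|ne]; apply: Hf.
by rewrite properEneq ne AB.
Qed.

Lemma rho1_ge0 f w S : nondecreasing_setfun f -> 0 <= rho1 f w S.
Proof. by move=> Hf; rewrite /rho1 /rho subr_ge0 monoS // subsetUl. Qed.

Lemma inv_greedy F f g : is_matroid F -> nondecreasing_setfun f ->
  subm_ratio_ok f g -> 0 <= g -> forall S U, greedy_reach F f S U ->
  [/\ S \in F, S \subset U, (forall x : T, x \in U -> x \notin S -> x |: S \notin F) &
   forall I : {set T}, I \in F -> (#|I| <= #|S|)%N -> forall Y : {set T}, S \subset Y ->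
     g * (f (Y :|: I) - f Y) <= f S - f set0].
Proof.
move=> [HF0 Hsub Hex] Hf Hg g0 S U; elim => {S U}.
  split => //; first by move=> x; rewrite inE.
  move=> I _; rewrite cards0 leqn0 cards_eq0 => /eqP -> Y _.
  by rewrite setU0 !subrr mulr0.
move=> S U i _ [HS SU Hrej Hgood] iU imax.
have iS : i \notin S by apply: contra iU; apply: (subsetP SU).
case: ifP => Hi.
- split => //.
  + exact: setUS.
  + move=> x; rewrite !in_setU1 negb_or => xU /andP[xi xS].
    have xU' : x \in U by case/predU1P: xU => // /eqP; rewrite (negbTE xi).
    apply: contra (Hrej x xU' xS) => H; apply: Hsub H.
    by apply: setUS; apply: subsetUr.
  + move=> I HI; rewrite cardsU1 iS add1n leq_eqVlt => /orP[/eqP cI|cI] Y SY.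
    * have lt : (#|S| < #|I|)%N by rewrite cI.
      have [o oD oF] := Hex S I HS HI lt.
      move: oD; rewrite inE => /andP[oS oI].
      have HI' : I :\ o \in F by apply: Hsub HI; apply: subsetDl.
      have cI' : (#|I :\ o| <= #|S|)%N.
        by move: cI; rewrite (cardsD1 o I) oI add1n => -[->].
      have SY' : S \subset Y by apply: subset_trans SY; apply: subsetUr.
      have h1 := Hgood _ HI' cI' Y SY'.
      have h2 := Hg S (Y :|: (I :\ o)) o.
      have eSY : S :|: (Y :|: (I :\ o)) = Y :|: (I :\ o).
        apply/setUidPr; apply: subset_trans SY' _; apply: subsetUl.
      rewrite eSY in h2.
      have oU : o \notin U.
        apply/negP => oU; move: (Hrej o oU oS); by rewrite oF.
      have h3 := imax o oU.
      have eI : Y :|: I = (Y :|: (I :\ o)) :|: [set o].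
        by rewrite -setUA [(I :\ o) :|: _]setUC setD1K.
      move: h1 h2 h3; rewrite eI /rho1 /rho [S :|: [set i]]setUC.
      set a := f (Y :|: (I :\ o)); set b := f (_ :|: [set o]).
      move=> h1 h2 h3.
      have -> : g * (b - f Y) = g * (b - a) + g * (a - f Y) by rewrite -mulrDr; congr (_ * _); lra.
      lra.
    * have SY' : S \subset Y by apply: subset_trans SY; apply: subsetUr.
      have h1 := Hgood I HI cI Y SY'.
      have := @monoS f _ _ Hf (subsetUr [set i] S); lra.
- split => //.
  + apply: subset_trans SU _; apply: subsetUr.
  + move=> x; rewrite in_setU1 => /predU1P[-> _|xU xS]; first by rewrite Hi.
    exact: Hrej.
Qed.

Lemma gamma_le1 f g (A : {set T}) : nondecreasing_setfun f -> subm_ratio_ok f g ->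
  f A != f set0 -> g <= 1.
Proof.
move=> Hf Hg HA; rewrite leNgt; apply/negP => g1.
have z : forall S w, rho1 f w S = 0.
  move=> S w; have := Hg S set0 w; rewrite setU0 => h.
  have := @rho1_ge0 f w S Hf => h0.
  apply/eqP; rewrite eq_le h0 andbT; nra.
suff H : forall n (B : {set T}), #|B| = n -> f B = f set0.
  by move: HA; rewrite (H _ A erefl) eqxx.
elim => [|n IH] B cB.
  by move/eqP: cB; rewrite cards_eq0 => /eqP ->.
have : (0 < #|B|)%N by rewrite cB.
rewrite card_gt0 => /set0Pn [x xB].
have cB' : #|B :\ x| = n by move: cB; rewrite (cardsD1 x B) xB add1n => -[].
have := z (B :\ x) x; rewrite /rho1 /rho setUC setD1K // => /eqP.
by rewrite subr_eq0 => /eqP ->; apply: IH.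
Qed.

End Proofs.
Arguments monoS {R T f A B}.
Arguments rho1_ge0 {R T f}.
Arguments inv_greedy {R T F f g}.
Arguments gamma_le1 {R T f g A}.

Theorem theorem2 (R : realFieldType) (T : finType) (F : {set {set T}}) (K : nat)
  (f : {set T} -> R) (gamma : R) (Sstar SG : {set T}) :
  is_matroid F ->
  max_indep_card F K ->
  nondecreasing_setfun f ->
  is_submodularity_ratio f gamma ->
  Sstar \in F -> (forall S, S \in F -> f S <= f Sstar) ->
  greedy_output F f SG ->
  f Sstar != f set0 ->
  gamma ^+ 3 / (gamma ^+ 3 + 1) <= (f SG - f set0) / (f Sstar - f set0).
Proof.
move=> HM _ Hf [g0 Hg _] HSs _ HG hne.
have [HSG _ Hrej Hgood] := inv_greedy HM Hf Hg g0 _ _ HG.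
have card : (#|Sstar| <= #|SG|)%N.
  rewrite leqNgt; apply/negP => lt.
  case: HM => _ _ Hex.
  have [w wD wF] := Hex SG Sstar HSG HSs lt.
  move: wD; rewrite inE => /andP[wSG _].
  by move: (Hrej w (in_setT w) wSG); rewrite wF.
have h := Hgood Sstar HSs card SG (subxx _).
have m1 : f Sstar <= f (SG :|: Sstar) by apply: monoS; rewrite // subsetUr.
have m2 : f set0 <= f SG by apply: monoS; rewrite // sub0set.
have m3 : f set0 < f Sstar.
  by rewrite lt_neqAle eq_sym hne /=; apply: monoS; rewrite // sub0set.
have g1 := gamma_le1 Hf Hg hne.
set a := f SG - f set0; set b := f Sstar - f set0.
have b0 : 0 < b by rewrite subr_gt0.
have a0 : 0 <= a by rewrite subr_ge0.
have hab : gamma * (b - a) <= a.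
  apply: le_trans h; apply: ler_wpM2l => //; rewrite /a /b; lra.
have gp : 0 < gamma ^+ 3 + 1 by rewrite ltr_wpDl // exprn_ge0.
rewrite ler_pdivrMr // mulrAC ler_pdivlMr //.
have e1 : gamma ^+ 2 * (gamma * (b - a)) <= gamma ^+ 2 * a.
  by apply: ler_wpM2l => //; rewrite exprn_ge0.
have e2 : gamma ^+ 2 * a <= a.
  by apply: ler_piMl => //; rewrite exprn_ile1.
have -> : gamma ^+ 3 = gamma ^+ 2 * gamma by rewrite exprSr.
move: e1 e2; set G := gamma ^+ 2; move=> e1 e2.
have : G * gamma * b - G * gamma * a <= a.
  apply: le_trans e2; apply: le_trans e1; rewrite le_eqVlt; apply/orP; left; apply/eqP; ring.
move=> H; have -> : a * (G * gamma + 1) = G * gamma * a + a by ring.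
lra.
Qed.
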